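(* Let $x,y>0$ and $z\ge 0$ (the approximation is intended for the regime $z\ll x,y$). Let $a=(x+y)/2$ and $g=\sqrt{xy}$. Then $$R_G(x,y,z)=R_G(x,y,0)+\pi\theta z/8,$$ where $$\frac{1}{\sqrt a}\left(1-\frac4\pi\sqrt{\frac za}\right)<\theta<\left(\frac{2}{ag+g^2}\right)^{1/4}\le\frac1{\sqrt g},$$ with equality in the last inequality iff $x=y$.
   Context: For $x,y,z\ge0$ with at most one zero: $R_G(x,y,z)=\frac14\int_0^\infty[(t+x)(t+y)(t+z)]^{-1/2}\left(\frac{x}{t+x}+\frac{y}{t+y}+\frac{z}{t+z}\right)t\,dt$. *)

(* Defs.v *)
From Stdlib Require Import Reals.
From Coquelicot Require Import Coquelicot.
Open Scope R_scope.

Definition RG_integrand (x y z t : R) : R :=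
  / 4 * (/ sqrt ((t + x) * (t + y) * (t + z)))
      * (x / (t + x) + y / (t + y) + z / (t + z)) * t.

Definition R_G (x y z : R) : R :=
  RInt_gen (RG_integrand x y z) (at_point 0) (Rbar_locally p_infty).

(* Main.v *)
Require Import Defs.
From Stdlib Require Import Reals Lra Psatz.
From Coquelicot Require Import Coquelicot.
Open Scope R_scope.

Lemma ball_R (l e v : R) : ball l e v <-> Rabs (v - l) < e.
Proof. unfold ball; simpl; unfold AbsRing_ball, abs, minus, plus, opp; simpl. tauto. Qed.

Lemma RInt_gen_of_lim (f : R -> R) (l : R) :
  (forall b, 0 <= b -> ex_RInt f 0 b) ->
  filterlim (fun b => RInt f 0 b) (Rbar_locally p_infty) (locally l) ->
  RInt_gen f (at_point 0) (Rbar_locally p_infty) = l.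
Proof.
  intros Hex Hlim. apply is_RInt_gen_unique.
  intros P HP. destruct (Hlim P HP) as [M HM].
  apply Filter_prod with (fun a => a = 0) (fun b => Rmax 0 M < b).
  - reflexivity.
  - exists (Rmax 0 M). auto.
  - intros a b -> Hb. simpl. exists (RInt f 0 b). split.
    + apply RInt_correct. apply Hex. generalize (Rmax_l 0 M); lra.
    + apply HM. generalize (Rmax_r 0 M); lra.
Qed.

Lemma mono_lim (F : R -> R) M :
  (forall u v, 0 <= u -> u <= v -> F u <= F v) -> (forall u, 0 <= u -> F u <= M) ->
  exists l : R, filterlim F (Rbar_locally p_infty) (locally l).
Proof.
  intros Hm Hb.
  set (E := fun v => exists u, 0 <= u /\ v = F u).
  assert (Hbd : bound E). { exists M. intros v [u [Hu ->]]. auto. }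
  assert (Hne : exists v, E v). { exists (F 0). exists 0. split; lra. }
  destruct (completeness E Hbd Hne) as [l [Hub Hlub]].
  exists l. apply filterlim_locally. intros eps.
  assert (exists u, 0 <= u /\ l - eps < F u) as [u0 [Hu0 Hf0]].
  { apply Classical_Pred_Type.not_all_not_ex. intros Hn.
    assert (l <= l - eps). { apply Hlub. intros v [u [Hu ->]].
      destruct (Rle_or_lt (F u) (l - eps)) as [H|H]; auto. exfalso; apply (Hn u); auto. }
    destruct eps; simpl in *; lra. }
  exists u0. intros u Hu. apply ball_R.
  assert (F u <= l) by (apply Hub; exists u; split; [lra|auto]).
  assert (F u0 <= F u) by (apply Hm; lra).
  apply Rabs_def1; lra.
Qed.

Lemma lim_le (F : R -> R) l M N :
  filterlim F (Rbar_locally p_infty) (locally l) -> (forall u, N < u -> F u <= M) -> l <= M.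
Proof.
  intros Hl HF. destruct (Rle_or_lt l M) as [H|H]; auto.
  assert (Hp : 0 < l - M) by lra.
  destruct (proj1 (filterlim_locally _ _) Hl (mkposreal _ Hp)) as [N1 HN1].
  set (u := Rmax N N1 + 1).
  specialize (HN1 u). specialize (HF u).
  assert (N < u /\ N1 < u) as [h1 h2] by (unfold u; generalize (Rmax_l N N1) (Rmax_r N N1); lra).
  specialize (HN1 h2). specialize (HF h1).
  assert (HH : Rabs (F u - l) < l - M) by (apply ball_R; exact HN1).
  destruct (Rabs_def2 _ _ HH). lra.
Qed.

Lemma lim_ge (F : R -> R) l M N :
  filterlim F (Rbar_locally p_infty) (locally l) -> (forall u, N < u -> M <= F u) -> M <= l.
Proof.
  intros Hl HF. destruct (Rle_or_lt M l) as [H|H]; auto.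
  assert (Hp : 0 < M - l) by lra.
  destruct (proj1 (filterlim_locally _ _) Hl (mkposreal _ Hp)) as [N1 HN1].
  set (u := Rmax N N1 + 1).
  specialize (HN1 u). specialize (HF u).
  assert (N < u /\ N1 < u) as [h1 h2] by (unfold u; generalize (Rmax_l N N1) (Rmax_r N N1); lra).
  specialize (HN1 h2). specialize (HF h1).
  assert (HH : Rabs (F u - l) < M - l) by (apply ball_R; exact HN1).
  destruct (Rabs_def2 _ _ HH). lra.
Qed.

Lemma lim_minus (F G : R -> R) l1 l2 :
  filterlim F (Rbar_locally p_infty) (locally l1) ->
  filterlim G (Rbar_locally p_infty) (locally l2) ->
  filterlim (fun u => F u - G u) (Rbar_locally p_infty) (locally (l1 - l2)).
Proof.
  intros H1 H2. apply filterlim_locally. intros eps.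
  assert (Hp : 0 < eps / 2) by (destruct eps; simpl; lra).
  destruct (proj1 (filterlim_locally _ _) H1 (mkposreal _ Hp)) as [N1 HN1].
  destruct (proj1 (filterlim_locally _ _) H2 (mkposreal _ Hp)) as [N2 HN2].
  exists (Rmax N1 N2). intros u Hu.
  generalize (Rmax_l N1 N2) (Rmax_r N1 N2); intros.
  specialize (HN1 u ltac:(lra)). specialize (HN2 u ltac:(lra)).
  assert (HH1 : Rabs (F u - l1) < eps/2) by (apply ball_R; exact HN1).
  assert (HH2 : Rabs (G u - l2) < eps/2) by (apply ball_R; exact HN2).
  apply ball_R.
  destruct (Rabs_def2 _ _ HH1); destruct (Rabs_def2 _ _ HH2). apply Rabs_def1; lra.
Qed.

Lemma sqrt_pinfty : filterlim sqrt (Rbar_locally p_infty) (Rbar_locally p_infty).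
Proof.
  intros P [M HM]. exists (M * M). intros b Hb. apply HM.
  destruct (Rle_or_lt M 0). { assert (0 < sqrt b). apply sqrt_lt_R0; nra. lra. }
  rewrite <- (sqrt_square M) by lra. apply sqrt_lt_1_alt. nra.
Qed.


Lemma cont_f_pos x y w t : 0 < x -> 0 < y -> 0 <= w -> 0 <= t -> 0 < t + w ->
  continuous (RG_integrand x y w) t.
Proof.
  intros hx hy hw ht htw. apply (ex_derive_continuous (K:=R_AbsRing) (V:=R_NormedModule)). unfold RG_integrand.
  auto_derive. repeat split; try lra.
  all: try (apply Rgt_not_eq || apply Rlt_not_eq); try apply sqrt_lt_R0; try (apply Rmult_lt_0_compat; [apply Rmult_lt_0_compat|]); lra.
Qed.

Definition h0 x y t := / 4 * / sqrt ((t + x) * (t + y)) * (x / (t + x) + y / (t + y)).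

Lemma f0_eq x y t : 0 < x -> 0 < y -> - Rmin x y < t ->
  RG_integrand x y 0 t = sqrt t * h0 x y t.
Proof.
  intros hx hy ht. generalize (Rmin_l x y) (Rmin_r x y); intros.
  unfold RG_integrand, h0. rewrite Rplus_0_r. unfold Rdiv at 3. rewrite Rmult_0_l, Rplus_0_r.
  destruct (Rle_or_lt t 0) as [Ht0|Ht0].
  - rewrite (sqrt_neg_0 t Ht0). rewrite sqrt_neg_0. rewrite Rinv_0. ring.
    assert (0 < (t+x)*(t+y)) by (apply Rmult_lt_0_compat; lra). nra.
  - rewrite sqrt_mult by nra. rewrite Rinv_mult.
    assert (0 < sqrt t) by (apply sqrt_lt_R0; lra).
    assert (0 < sqrt ((t+x)*(t+y))) by (apply sqrt_lt_R0; nra).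
    assert (Hq : / sqrt t * t = sqrt t).
    { rewrite <- (sqrt_sqrt t) at 2 by lra. field. lra. }
    set (S := x / (t + x) + y / (t + y)).
    transitivity (/4 * / sqrt ((t+x)*(t+y)) * S * (/ sqrt t * t)); [ring|].
    rewrite Hq. ring.
Qed.

Lemma cont_f x y w t : 0 < x -> 0 < y -> 0 <= w -> 0 <= t ->
  continuous (RG_integrand x y w) t.
Proof.
  intros hx hy hw ht. destruct (Rlt_or_le 0 (t + w)) as [H|H].
  - apply cont_f_pos; auto.
  - assert (w = 0) by lra. assert (t = 0) by lra. subst.
    apply (continuous_ext_loc _ (fun t => sqrt t * h0 x y t)).
    + assert (hm : 0 < Rmin x y) by (apply Rmin_pos; auto).
      exists (mkposreal _ hm). intros t Ht.
      assert (HH : Rabs (t - 0) < Rmin x y) by (apply ball_R; exact Ht).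
      symmetry. apply f0_eq; auto. destruct (Rabs_def2 _ _ HH). lra.
    + apply (continuous_mult (K:=R_AbsRing) sqrt (h0 x y)).
      * apply continuous_sqrt.
      * apply (ex_derive_continuous (K:=R_AbsRing) (V:=R_NormedModule)). unfold h0.
        auto_derive. repeat split; try lra.
        all: try (apply Rgt_not_eq || apply Rlt_not_eq); try apply sqrt_lt_R0; nra.
Qed.

Definition Aw x y w u := 2 * u * RG_integrand x y w (u * u).

Lemma subst_eq x y w C : 0 < x -> 0 < y -> 0 <= w -> 0 <= C ->
  is_RInt (Aw x y w) 0 C (RInt (RG_integrand x y w) 0 (C * C)).
Proof.
  intros hx hy hw hC.
  assert (H := is_RInt_comp (V:=R_CompleteNormedModule) (RG_integrand x y w) (fun u => u * u) (fun u => 2 * u) 0 C).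
  cbv beta in H. rewrite Rmult_0_l in H. apply H.
  - intros u Hu. apply cont_f; auto. nra.
  - intros u Hu. split.
    + auto_derive; auto; ring.
    + apply (ex_derive_continuous (K:=R_AbsRing) (V:=R_NormedModule)). auto_derive. auto.
Qed.

Lemma RG_of_lim x y w l : 0 < x -> 0 < y -> 0 <= w ->
  filterlim (fun C => RInt (Aw x y w) 0 C) (Rbar_locally p_infty) (locally l) ->
  R_G x y w = l.
Proof.
  intros hx hy hw Hl. unfold R_G. apply RInt_gen_of_lim.
  - intros b Hb. apply (ex_RInt_continuous (V:=R_CompleteNormedModule)).
    intros u Hu. apply cont_f; auto. rewrite Rmin_left in Hu; lra.
  - apply (filterlim_ext_loc (fun b => RInt (Aw x y w) 0 (sqrt b))).
    + exists 0. intros b Hb. apply is_RInt_unique.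
      rewrite <- (sqrt_sqrt b) at 2 by lra. apply subst_eq; auto. apply sqrt_pos.
    + apply (filterlim_comp _ _ _ sqrt (fun C => RInt (Aw x y w) 0 C) _ (Rbar_locally p_infty)).
      apply sqrt_pinfty. exact Hl.
Qed.

Lemma frac_bd w t : 0 <= w -> 0 < t -> 0 <= w / (t + w) * t <= w.
Proof.
  intros hw ht. assert (0 < t + w) by lra.
  assert (Hi : / (t + w) * (t + w) = 1) by (field; lra).
  assert (0 < / (t + w)) by (apply Rinv_0_lt_compat; lra).
  unfold Rdiv. split.
  - apply Rmult_le_pos; [apply Rmult_le_pos|]; lra.
  - nra.
Qed.

Lemma Aw_bounds x y w u : 0 < x -> 0 < y -> 0 <= w -> 0 < u ->
  0 <= Aw x y w u <= (x + y + w) / (2 * (u * u + Rmin x y)).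
Proof.
  intros hx hy hw hu. set (k := Rmin x y). set (t := u * u).
  assert (hk : 0 < k) by (apply Rmin_pos; auto).
  assert (k <= x /\ k <= y) as [hkx hky] by (split; [apply Rmin_l|apply Rmin_r]).
  assert (ht : 0 < t) by (unfold t; nra).
  unfold Aw, RG_integrand. fold t.
  destruct (frac_bd x t) as [a1 a2]; try lra.
  destruct (frac_bd y t) as [b1 b2]; try lra.
  destruct (frac_bd w t) as [c1 c2]; try lra.
  set (St := (x / (t + x) + y / (t + y) + w / (t + w)) * t).
  assert (HSt : 0 <= St <= x + y + w) by (unfold St; split; nra).
  set (D := sqrt ((t + x) * (t + y) * (t + w))).
  assert (HD : (t + k) * u <= D).
  { unfold D. rewrite <- (sqrt_square ((t+k)*u)) by nra. apply sqrt_le_1_alt.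
    assert ((t+k)*(t+k) <= (t+x)*(t+y)) by nra.
    assert (u * u <= t + w) by (unfold t; lra).
    replace ((t+k)*u*((t+k)*u)) with ((t+k)*(t+k)*(u*u)) by ring. apply Rmult_le_compat; nra. }
  assert (HD0 : 0 < (t + k) * u) by nra.
  assert (HiD : / D <= / ((t + k) * u)) by (apply Rinv_le_contravar; auto).
  assert (0 < / D) by (apply Rinv_0_lt_compat; lra).
  replace (2 * u * (/ 4 * / D * (x / (t + x) + y / (t + y) + w / (t + w)) * t))
    with (u / 2 * / D * St) by (unfold St; field; lra).
  split.
  - apply Rmult_le_pos; [apply Rmult_le_pos|]; lra.
  - apply Rle_trans with (u / 2 * / ((t + k) * u) * (x + y + w)).
    + apply Rmult_le_compat; try lra.
      * apply Rmult_le_pos; lra.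
      * apply Rmult_le_compat_l; lra.
    + right. field. split; lra.
Qed.

Lemma cont_A x y w u : 0 < x -> 0 < y -> 0 <= w -> continuous (Aw x y w) u.
Proof.
  intros hx hy hw. unfold Aw.
  apply (continuous_mult (K:=R_AbsRing) (fun u => 2 * u) (fun u => RG_integrand x y w (u * u))).
  - apply (ex_derive_continuous (K:=R_AbsRing) (V:=R_NormedModule)). auto_derive. auto.
  - apply (continuous_comp (fun u => u * u) (RG_integrand x y w)).
    + apply (ex_derive_continuous (K:=R_AbsRing) (V:=R_NormedModule)). auto_derive. auto.
    + apply cont_f; auto. nra.
Qed.

Lemma exA x y w a b : 0 < x -> 0 < y -> 0 <= w -> ex_RInt (Aw x y w) a b.
Proof. intros. apply (ex_RInt_continuous (V:=R_CompleteNormedModule)). intros; apply cont_A; auto. Qed.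

Lemma RInt_deriv (F f : R -> R) a b :
  (forall u : R, is_derive F u (f u)) -> (forall u : R, continuous f u) ->
  RInt f a b = F b - F a /\ ex_RInt f a b.
Proof.
  intros HF Hc.
  assert (H : is_RInt f a b (minus (F b) (F a))).
  { apply (is_RInt_derive (V:=R_CompleteNormedModule)); intros; auto. }
  split. rewrite (is_RInt_unique (V:=R_CompleteNormedModule) _ _ _ _ H). reflexivity.
  eexists; eauto.
Qed.

Lemma lim_A x y w : 0 < x -> 0 < y -> 0 <= w ->
  exists l : R, filterlim (fun C => RInt (Aw x y w) 0 C) (Rbar_locally p_infty) (locally l).
Proof.
  intros hx hy hw. set (k := Rmin x y). set (K := x + y + w).
  assert (hk : 0 < k) by (apply Rmin_pos; auto).
  assert (hsk : 0 < sqrt k) by (apply sqrt_lt_R0; auto).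
  assert (hkk : sqrt k * sqrt k = k) by (apply sqrt_sqrt; lra).
  apply mono_lim with (K / (2 * sqrt k) * (PI / 2)).
  - intros u v hu huv. rewrite <- (RInt_Chasles _ 0 u v) by (apply exA; auto).
    assert (0 <= RInt (Aw x y w) u v).
    { apply RInt_ge_0; auto. apply exA; auto. intros t Ht. apply Aw_bounds; auto; lra. }
    change (RInt (Aw x y w) 0 u <= RInt (Aw x y w) 0 u + RInt (Aw x y w) u v). lra.
  - intros C hC.
    destruct (RInt_deriv (fun u => K / (2 * sqrt k) * atan (u / sqrt k))
                (fun u => K / (2 * (u * u + k))) 0 C) as [E1 E2].
    + intros u. auto_derive. auto. set (s := sqrt k) in *. rewrite <- hkk. field. split; nra.
    + intros u. apply (ex_derive_continuous (K:=R_AbsRing) (V:=R_NormedModule)). auto_derive. nra.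
    + apply Rle_trans with (RInt (fun u => K / (2 * (u * u + k))) 0 C).
      * apply RInt_le; auto. apply exA; auto. intros u Hu. apply Aw_bounds; auto; lra.
      * rewrite E1. rewrite Rdiv_0_l, atan_0, Rmult_0_r, Rminus_0_r.
        apply Rmult_le_compat_l. apply Rmult_le_pos. unfold K; lra.
        apply Rlt_le, Rinv_0_lt_compat; lra.
        destruct (atan_bound (C / sqrt k)). lra.
Qed.


Definition rr x y u := sqrt ((u * u + x) * (u * u + y)).
Definition ss z u := sqrt (u * u + z).
Definition ef x y z u := u / (2 * rr x y u) * (u - u * u / ss z u).
Definition Hf x y z u := / 2 * (u * u * u) * (u / ss z u - 1) / rr x y u.

Lemma Az_form x y z u : 0 < x -> 0 < y -> 0 < z -> 0 < u ->
  Aw x y z u = u * u * u * (x / (u*u + x) + y / (u*u + y) + z / (u*u + z)) / (2 * rr x y u * ss z u).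
Proof.
  intros. unfold Aw, RG_integrand, rr, ss.
  rewrite sqrt_mult by nra.
  assert (0 < sqrt ((u*u+x)*(u*u+y))) by (apply sqrt_lt_R0; nra).
  assert (0 < sqrt (u*u+z)) by (apply sqrt_lt_R0; nra).
  field. repeat split; nra.
Qed.

Lemma A0_form x y u : 0 < x -> 0 < y -> 0 < u ->
  Aw x y 0 u = u * u * (x / (u*u + x) + y / (u*u + y)) / (2 * rr x y u).
Proof.
  intros. unfold Aw, RG_integrand, rr. rewrite Rplus_0_r.
  rewrite sqrt_mult by nra. rewrite sqrt_square by lra.
  assert (0 < sqrt ((u*u+x)*(u*u+y))) by (apply sqrt_lt_R0; nra).
  field. repeat split; nra.
Qed.

Lemma H_deriv x y z u : 0 < x -> 0 < y -> 0 < z -> 0 < u ->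
  is_derive (Hf x y z) u (Aw x y z u - Aw x y 0 u - ef x y z u).
Proof.
  intros hx hy hz hu. rewrite Az_form, A0_form by auto. unfold Hf, ef.
  unfold rr, ss.
  assert (0 < (u*u+x)*(u*u+y)) by nra.
  assert (0 < sqrt ((u*u+x)*(u*u+y))) by (apply sqrt_lt_R0; nra).
  assert (0 < sqrt (u*u+z)) by (apply sqrt_lt_R0; nra).
  auto_derive.
  - repeat split; try apply Rgt_not_eq; try lra; nra.
  - assert (Hr : sqrt ((u*u+x)*(u*u+y)) * sqrt ((u*u+x)*(u*u+y)) = (u*u+x)*(u*u+y)) by (apply sqrt_sqrt; nra).
    assert (Hs : sqrt (u*u+z) * sqrt (u*u+z) = u*u+z) by (apply sqrt_sqrt; nra).
    set (r := sqrt ((u*u+x)*(u*u+y))) in *. set (s := sqrt (u*u+z)) in *.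
    clearbody r s.
    assert (Hz : z = s * s - u * u) by lra.
    assert (Hy : y = r * r / (u*u+x) - u*u) by (rewrite Hr; field; nra).
    subst z y. field. 
    repeat split; try lra; nra.
Qed.

Lemma H_deriv0 x y z : 0 < x -> 0 < y -> 0 < z ->
  is_derive (Hf x y z) 0 (Aw x y z 0 - Aw x y 0 0 - ef x y z 0).
Proof.
  intros hx hy hz. unfold Hf, ef, Aw, rr, ss.
  assert (0 < (0*0+x)*(0*0+y)) by nra.
  assert (0 < sqrt ((0*0+x)*(0*0+y))) by (apply sqrt_lt_R0; nra).
  assert (0 < sqrt (0*0+z)) by (apply sqrt_lt_R0; nra).
  auto_derive.
  - repeat split; try apply Rgt_not_eq; try lra; nra.
  - unfold Rdiv. ring.
Qed.

Lemma cont_ef x y z u : 0 < x -> 0 < y -> 0 < z -> continuous (ef x y z) u.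
Proof.
  intros hx hy hz. apply (ex_derive_continuous (K:=R_AbsRing) (V:=R_NormedModule)).
  unfold ef, rr, ss.
  assert (0 < (u*u+x)*(u*u+y)) by nra.
  assert (0 < sqrt ((u*u+x)*(u*u+y))) by (apply sqrt_lt_R0; nra).
  assert (0 < sqrt (u*u+z)) by (apply sqrt_lt_R0; nra).
  auto_derive. repeat split; try apply Rgt_not_eq; try lra; nra.
Qed.

Lemma exE x y z a b : 0 < x -> 0 < y -> 0 < z -> ex_RInt (ef x y z) a b.
Proof. intros. apply (ex_RInt_continuous (V:=R_CompleteNormedModule)). intros; apply cont_ef; auto. Qed.

Lemma diff_eq x y z C : 0 < x -> 0 < y -> 0 < z -> 0 <= C ->
  RInt (Aw x y z) 0 C - RInt (Aw x y 0) 0 C = RInt (ef x y z) 0 C + Hf x y z C.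
Proof.
  intros hx hy hz hC.
  assert (H : is_RInt (fun u => Aw x y z u - Aw x y 0 u - ef x y z u) 0 C (minus (Hf x y z C) (Hf x y z 0))).
  { apply (is_RInt_derive (V:=R_CompleteNormedModule)).
    - intros u Hu. rewrite Rmin_left in Hu by lra.
      destruct (Rle_lt_or_eq_dec 0 u) as [h|h]; [lra| |].
      + apply H_deriv; auto.
      + subst u. apply H_deriv0; auto.
    - intros u Hu.
      apply (continuous_minus (K:=R_AbsRing) (fun u => Aw x y z u - Aw x y 0 u) (ef x y z)).
      apply (continuous_minus (K:=R_AbsRing) (Aw x y z) (Aw x y 0)).
      apply cont_A; lra. apply cont_A; lra. apply cont_ef; auto. }
  apply (is_RInt_unique (V:=R_CompleteNormedModule)) in H.
  assert (HH0 : Hf x y z 0 = 0) by (unfold Hf; unfold Rdiv; ring).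
  rewrite HH0 in H.
  rewrite (RInt_minus (V:=R_CompleteNormedModule) (fun u => Aw x y z u - Aw x y 0 u) (ef x y z)) in H.
  rewrite (RInt_minus (V:=R_CompleteNormedModule) (Aw x y z) (Aw x y 0)) in H.
  - change (RInt (Aw x y z) 0 C - RInt (Aw x y 0) 0 C - RInt (ef x y z) 0 C = Hf x y z C - 0) in H. lra.
  - apply exA; lra.
  - apply exA; lra.
  - apply (ex_RInt_minus (V:=R_CompleteNormedModule) (Aw x y z) (Aw x y 0)); apply exA; lra.
  - apply exE; auto.
Qed.


Lemma landen_alg a g c w : 0 < g -> g <= a -> 0 < c -> c * c = g * ((a + g) / 2) -> 0 <= w ->
  ((w - g)^2 + 4 * c * w) ^ 2 <= (w * w + 2 * a * w + g * g) * (w + g) ^ 2.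
Proof.
  intros hg ha hc Hc hw.
  assert (Hk : 2 * c <= (a + g) / 2 + g).
  { assert (((a+g)/2 + g)^2 - (2*c)^2 = ((a+g)/2 - g)^2) by (replace ((2*c)^2) with (4*(c*c)) by ring; rewrite Hc; field).
    nra. }
  assert (E : (w * w + 2 * a * w + g * g) * (w + g) ^ 2 - ((w - g)^2 + 4 * c * w) ^ 2
              = 4 * w * (w - g)^2 * ((a + g) / 2 + g - 2 * c)).
  { replace (((w - g)^2 + 4 * c * w) ^ 2) with ((w-g)^4 + 8 * c * w * (w-g)^2 + 16 * (c * c) * w * w) by ring.
    rewrite Hc. field. }
  assert (0 <= 4 * w * (w - g)^2 * ((a + g) / 2 + g - 2 * c)).
  { apply Rmult_le_pos; [apply Rmult_le_pos; [lra|apply pow2_ge_0]|lra]. }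
  lra.
Qed.

Ltac pos := repeat (apply Rmult_lt_0_compat || apply Rplus_lt_0_compat || apply Rinv_0_lt_compat || apply pow_lt); try nra.

Lemma div_le a b c d : 0 < b -> 0 < d -> a * d <= c * b -> a / b <= c / d.
Proof.
  intros hb hd H. unfold Rdiv.
  apply Rmult_le_reg_r with (b * d). nra.
  replace (a * / b * (b * d)) with (a * d) by (field; lra).
  replace (c * / d * (b * d)) with (c * b) by (field; lra). lra.
Qed.

Lemma e_form u r s z : 0 < u -> 0 < r -> 0 < s -> s * s = u * u + z ->
  u / (2 * r) * (u - u * u / s) = u * u * z / (2 * r * s * (s + u)).
Proof.
  intros hu hr hs Hs. assert (Hz : z = s * s - u * u) by lra. subst z. field. lra.
Qed.

Lemma e_lower x y u r s z : 0 < x -> 0 < y -> 0 < z -> 0 < u -> 0 < r -> 0 < s ->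
  r * r = (u*u + x) * (u*u + y) -> s * s = u * u + z ->
  z / 4 * (1 / (u * u + (x+y)/2) - z / ((x+y)/2 * (u * u + z))) <= u / (2 * r) * (u - u * u / s).
Proof.
  intros hx hy hz hu hr hs Hr Hs. rewrite (e_form u r s z) by auto.
  set (a := (x+y)/2). assert (ha : 0 < a) by (unfold a; lra).
  assert (hra : r <= u*u + a).
  { assert (r * r <= (u*u+a)*(u*u+a)) by (rewrite Hr; unfold a; pose proof (Rle_0_sqr (x - y)); unfold Rsqr in *; nra). nra. }
  assert (hsu : u <= s) by nra.
  apply Rle_trans with (u * u * z / (4 * (u*u + a) * (u * u + z))).
  - assert (E : u * u * z / (4 * (u*u + a) * (u * u + z)) - z / 4 * (1 / (u * u + a) - z / (a * (u * u + z)))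
       = z / 4 * (z / (a * (u*u+z)) - z / ((u*u+a) * (u*u+z)))).
    { field. repeat split; nra. }
    assert (0 <= z / (a * (u*u+z)) - z / ((u*u+a) * (u*u+z))).
    { assert (z / ((u*u+a) * (u*u+z)) <= z / (a * (u*u+z))) by (apply div_le; nra). lra. }
    assert (0 <= z / 4 * (z / (a * (u*u+z)) - z / ((u*u+a) * (u*u+z)))) by (apply Rmult_le_pos; lra).
    lra.
  - apply div_le. pos. pos.
    rewrite <- Hs.
    assert (0 <= u*u*z) by nra.
    assert (2 * r * s * (s + u) <= 4 * (u*u+a) * (s*s)).
    { assert (s + u <= 2 * s) by lra.
      assert (r * (s + u) <= (u*u+a) * (2*s)) by (apply Rmult_le_compat; lra).
      nra. }
    apply Rmult_le_compat_l; lra.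
Qed.

Lemma e_upper x y u r s z : 0 < x -> 0 < y -> 0 < z -> 0 < u -> 0 < r -> 0 < s ->
  r * r = (u*u + x) * (u*u + y) -> s * s = u * u + z ->
  u / (2 * r) * (u - u * u / s) <=
  z / (4 * r) - z * z / (4 * (1 + (x+y)/2) * (2 + z)) * (2 * u / (1 + u * u) ^ 3).
Proof.
  intros hx hy hz hu hr hs Hr Hs. rewrite (e_form u r s z) by auto.
  set (a := (x+y)/2). assert (ha : 0 < a) by (unfold a; lra).
  assert (hra : r <= u*u + a).
  { assert (r * r <= (u*u+a)*(u*u+a)) by (rewrite Hr; unfold a; pose proof (Rle_0_sqr (x - y)); unfold Rsqr in *; nra). nra. }
  assert (hsu : u <= s) by nra.
  apply Rle_trans with (u * u * z / (2 * r * (2 * u * u + z))).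
  - apply div_le. pos. pos.
    assert (0 <= u*u*z) by nra.
    assert (2 * u * u + z <= s * (s + u)) by nra.
    apply Rmult_le_compat_l. lra. nra.
  - assert (E : u * u * z / (2 * r * (2 * u * u + z)) = z / (4 * r) - z * z / (4 * r * (2 * u * u + z))).
    { field. split; nra. }
    rewrite E.
    assert (z * z / (4 * (1 + a) * (2 + z)) * (2 * u / (1 + u * u) ^ 3) <= z * z / (4 * r * (2 * u * u + z))).
    { replace (z * z / (4 * (1 + a) * (2 + z)) * (2 * u / (1 + u * u) ^ 3))
        with (z * z * (2 * u) / (4 * (1 + a) * (2 + z) * (1 + u * u) ^ 3)) by (field; split; nra).
      apply div_le. pos. pos.
      assert (h1 : r <= (1 + a) * (1 + u*u)) by nra.
      assert (h2 : 2 * u * u + z <= (2 + z) * (1 + u*u)) by nra.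
      assert (h3 : 2 * u <= 1 + u * u) by (pose proof (Rle_0_sqr (u-1)); unfold Rsqr in *; nra).
      assert (h4 : r * (2 * u * u + z) <= (1 + a) * (1 + u*u) * ((2 + z) * (1 + u*u)))
        by (apply Rmult_le_compat; nra).
      assert (h5 : 2 * u * (r * (2 * u * u + z)) <= (1 + u*u) * ((1 + a) * (1 + u*u) * ((2 + z) * (1 + u*u))))
        by (apply Rmult_le_compat; nra).
      assert (0 <= z * z) by nra.
      replace (z * z * (2 * u) * (4 * r * (2 * u * u + z))) with (4 * (z * z) * (2 * u * (r * (2 * u * u + z)))) by ring.
      replace (z * z * (4 * (1 + a) * (2 + z) * (1 + u * u) ^ 3)) with (4 * (z * z) * ((1 + u*u) * ((1 + a) * (1 + u*u) * ((2 + z) * (1 + u*u))))) by ring.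
      apply Rmult_le_compat_l; nra. }
    lra.
Qed.

Lemma inv_r_le x y u r g c : 0 < x -> 0 < y -> 0 <= u -> 0 < r -> r * r = (u*u + x) * (u*u + y) ->
  0 < g -> g * g = x * y -> g <= (x+y)/2 -> 0 < c -> c * c = g * (((x+y)/2 + g) / 2) ->
  / r <= (u * u + g) / ((u * u - g) ^ 2 + 4 * c * (u * u)).
Proof.
  intros hx hy hu hr Hr hg Hg hga hc Hc.
  set (w := u * u). assert (hw : 0 <= w) by (unfold w; nra).
  set (a := (x+y)/2) in *.
  assert (HQ : 0 < (w - g) ^ 2 + 4 * c * w).
  { destruct (Rle_lt_or_eq_dec 0 w hw) as [h|h].
    - assert (0 < 4 * c * w) by (apply Rmult_lt_0_compat; lra). assert (0 <= (w-g)^2) by apply pow2_ge_0. lra.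
    - rewrite <- h. nra. }
  assert (HL := landen_alg a g c w hg hga hc Hc hw).
  assert (HP : w * w + 2 * a * w + g * g = r * r) by (rewrite Hr; unfold a; fold w; rewrite Hg; field).
  rewrite HP in HL.
  assert (HQ2 : (w - g) ^ 2 + 4 * c * w <= r * (w + g)).
  { apply Rsqr_incr_0_var. unfold Rsqr. replace (r * (w + g) * (r * (w + g))) with (r * r * (w + g) ^ 2) by ring.
    replace (((w - g) ^ 2 + 4 * c * w) * ((w - g) ^ 2 + 4 * c * w)) with (((w - g) ^ 2 + 4 * c * w) ^ 2) by ring. lra.
    nra. }
  replace (/ r) with (1 / r) by (field; lra).
  apply div_le; auto. lra.
Qed.


Lemma RInt_deriv_int (F f : R -> R) a b : a <= b ->
  (forall u : R, a <= u <= b -> is_derive F u (f u)) -> (forall u : R, a <= u <= b -> continuous f u) ->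
  RInt f a b = F b - F a /\ ex_RInt f a b.
Proof.
  intros hab HF Hc.
  assert (H : is_RInt f a b (minus (F b) (F a))).
  { apply (is_RInt_derive (V:=R_CompleteNormedModule)); intros u Hu;
    rewrite Rmin_left, Rmax_right in Hu by lra; auto. }
  split. rewrite (is_RInt_unique (V:=R_CompleteNormedModule) _ _ _ _ H). reflexivity.
  eexists; eauto.
Qed.

Definition bfun g c u := (u * u + g) / ((u * u - g) ^ 2 + 4 * c * (u * u)).

Lemma Q_pos g c u : 0 < g -> 0 < c -> 0 < (u * u - g) ^ 2 + 4 * c * (u * u).
Proof.
  intros hg hc. assert (0 <= u * u) by nra.
  destruct (Rle_lt_or_eq_dec 0 (u*u) H) as [h|h].
  - assert (0 < 4 * c * (u*u)) by (apply Rmult_lt_0_compat; lra). assert (0 <= (u*u-g)^2) by apply pow2_ge_0. lra.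
  - rewrite <- h. nra.
Qed.

Lemma cont_bfun g c u : 0 < g -> 0 < c -> continuous (bfun g c) u.
Proof.
  intros hg hc. apply (ex_derive_continuous (K:=R_AbsRing) (V:=R_NormedModule)). unfold bfun.
  auto_derive. apply Rgt_not_eq, Q_pos; auto.
Qed.

Lemma bfun_le g c u : 0 < g -> g <= c -> bfun g c u <= / g.
Proof.
  intros hg hgc. unfold bfun. assert (0 <= u*u) by nra.
  replace (/ g) with (1 / g) by (field; lra).
  apply div_le. apply Q_pos; lra. lra.
  assert ((u*u+g)*g <= (u*u+g)*(u*u+g)) by nra.
  assert ((u*u+g)*(u*u+g) <= (u*u-g)^2 + 4*c*(u*u)) by nra. nra.
Qed.

Lemma bfun_deriv g c u : 0 < g -> 0 < c -> 0 < u ->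
  is_derive (fun u => atan ((u * u - g) / (2 * sqrt c * u)) / (2 * sqrt c)) u (bfun g c u).
Proof.
  intros hg hc hu. assert (hsc : 0 < sqrt c) by (apply sqrt_lt_R0; auto).
  assert (Hsc : sqrt c * sqrt c = c) by (apply sqrt_sqrt; lra).
  auto_derive.
  - apply Rgt_not_eq; pos.
  - unfold bfun. set (sc := sqrt c) in *. clearbody sc. subst c. field. split; [apply Rgt_not_eq, Q_pos; nra|split; lra].





Qed.

Lemma ex_bfun g c a b : 0 < g -> 0 < c -> ex_RInt (bfun g c) a b.
Proof. intros. apply (ex_RInt_continuous (V:=R_CompleteNormedModule)). intros; apply cont_bfun; auto. Qed.

Lemma RInt_bfun g c C : 0 < g -> g <= c -> 0 <= C -> RInt (bfun g c) 0 C <= PI / (2 * sqrt c).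
Proof.
  intros hg hgc hC. assert (hc : 0 < c) by lra.
  assert (hsc : 0 < sqrt c) by (apply sqrt_lt_R0; auto).
  assert (Heps : forall eps, 0 < eps <= C -> RInt (bfun g c) 0 C <= eps / g + PI / (2 * sqrt c)).
  { intros eps Heps.
    rewrite <- (RInt_Chasles _ 0 eps C) by (apply ex_bfun; auto).
    assert (H1 : RInt (bfun g c) 0 eps <= RInt (fun _ => / g) 0 eps).
    { apply RInt_le. lra. apply ex_bfun; auto. apply ex_RInt_const.
      intros; apply bfun_le; auto. }
    rewrite RInt_const in H1. change (scal (eps - 0) (/ g)) with ((eps - 0) * / g) in H1.
    destruct (RInt_deriv_int (fun u => atan ((u * u - g) / (2 * sqrt c * u)) / (2 * sqrt c)) (bfun g c) eps C)
      as [E _]. lra.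
    intros u Hu. apply bfun_deriv; auto; lra.
    intros u Hu. apply cont_bfun; auto.
    change (plus (RInt (bfun g c) 0 eps) (RInt (bfun g c) eps C)) with (RInt (bfun g c) 0 eps + RInt (bfun g c) eps C).
    rewrite E.
    destruct (atan_bound ((C * C - g) / (2 * sqrt c * C))).
    destruct (atan_bound ((eps * eps - g) / (2 * sqrt c * eps))).
    assert (HH : atan ((C * C - g) / (2 * sqrt c * C)) / (2 * sqrt c) - atan ((eps * eps - g) / (2 * sqrt c * eps)) / (2 * sqrt c)
            <= PI / (2 * sqrt c)).
    { unfold Rdiv at 1 3. rewrite <- Rmult_minus_distr_r.
      unfold Rdiv. apply Rmult_le_compat_r. apply Rlt_le, Rinv_0_lt_compat; lra. lra. }
    replace (eps / g) with ((eps - 0) * / g) by (unfold Rdiv; ring). lra. }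
  destruct (Rle_or_lt (RInt (bfun g c) 0 C) (PI / (2 * sqrt c))) as [H|H]; auto.
  destruct (Rle_lt_or_eq_dec 0 C hC) as [hC'|hC'].
  - set (d := RInt (bfun g c) 0 C - PI / (2 * sqrt c)).
    set (eps := Rmin C (d * g / 2)).
    assert (he1 : 0 < eps) by (unfold eps; apply Rmin_pos; [lra| unfold d; apply Rmult_lt_0_compat; [apply Rmult_lt_0_compat; lra | lra]]).
    assert (he2 : eps <= C) by apply Rmin_l.
    assert (he3 : eps <= d * g / 2) by apply Rmin_r.
    specialize (Heps eps (conj he1 he2)).
    assert (eps / g <= d / 2) by (apply Rmult_le_reg_r with g; auto; unfold Rdiv; field_simplify; try lra; nra).
    unfold d in *. lra.
  - subst C. rewrite RInt_point in H. assert (0 < PI / (2 * sqrt c)) by (apply Rmult_lt_0_compat; [apply PI_RGT_0| apply Rinv_0_lt_compat; lra]).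
    change (zero : R) with 0 in H. lra.
Qed.


Ltac pos2 := first [ nra | apply Rmult_lt_0_compat; pos2 | apply Rinv_0_lt_compat; pos2 | apply pow_lt; pos2 | apply Rplus_lt_0_compat; pos2 ].

Lemma RInt_lin (f g : R -> R) (p q a b : R) : ex_RInt f a b -> ex_RInt g a b ->
  RInt (fun u => p * f u - q * g u) a b = p * RInt f a b - q * RInt g a b.
Proof.
  intros Hf Hg.
  rewrite (RInt_minus (V:=R_CompleteNormedModule) (fun u => p * f u) (fun u => q * g u)).
  - assert (E1 : RInt (fun u => p * f u) a b = p * RInt f a b) by exact (RInt_scal (V:=R_CompleteNormedModule) f a b p Hf).
    assert (E2 : RInt (fun u => q * g u) a b = q * RInt g a b) by exact (RInt_scal (V:=R_CompleteNormedModule) g a b q Hg).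
    rewrite E1, E2. reflexivity.
  - apply (ex_RInt_scal (V:=R_CompleteNormedModule) f a b p); auto.
  - apply (ex_RInt_scal (V:=R_CompleteNormedModule) g a b q); auto.
Qed.

Lemma consts x y : 0 < x -> 0 < y ->
  let a := (x + y) / 2 in let g := sqrt (x * y) in let c := sqrt (g * ((a + g) / 2)) in
  0 < g /\ g * g = x * y /\ g <= a /\ 0 < c /\ c * c = g * ((a + g) / 2) /\ g <= c.
Proof.
  intros hx hy a g c.
  assert (hg : 0 < g) by (apply sqrt_lt_R0; nra).
  assert (Hg : g * g = x * y) by (apply sqrt_sqrt; nra).
  assert (hga : g <= a).
  { assert (g * g <= a * a) by (rewrite Hg; unfold a; pose proof (Rle_0_sqr (x - y)); unfold Rsqr in *; nra).
    assert (0 < a) by (unfold a; lra). nra. }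
  assert (hc : 0 < c) by (apply sqrt_lt_R0; apply Rmult_lt_0_compat; lra).
  assert (Hc : c * c = g * ((a + g) / 2)) by (apply sqrt_sqrt; apply Rmult_le_pos; lra).
  repeat split; auto.
  assert (g * g <= c * c) by (rewrite Hc; nra). nra.
Qed.

Lemma rr_facts x y u : 0 < x -> 0 < y -> 0 < rr x y u /\ rr x y u * rr x y u = (u*u + x) * (u*u + y).
Proof.
  intros. unfold rr. split. apply sqrt_lt_R0; nra. apply sqrt_sqrt; nra.
Qed.

Lemma ss_facts z u : 0 < z -> 0 < ss z u /\ ss z u * ss z u = u * u + z.
Proof.
  intros. unfold ss. split. apply sqrt_lt_R0; nra. apply sqrt_sqrt; nra.
Qed.

Lemma IE_upper x y z C : 0 < x -> 0 < y -> 0 < z -> 0 <= C ->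
  let a := (x + y) / 2 in let g := sqrt (x * y) in let c := sqrt (g * ((a + g) / 2)) in
  RInt (ef x y z) 0 C <= z / 4 * (PI / (2 * sqrt c))
     - z * z / (4 * (1 + (x+y)/2) * (2 + z)) * (/ 2 - / (2 * (1 + C * C) ^ 2)).
Proof.
  intros hx hy hz hC a g c.
  destruct (consts x y hx hy) as (hg & Hg & hga & hc & Hc & hgc). fold a g c in hg, Hg, hga, hc, Hc, hgc.
  set (d := z * z / (4 * (1 + (x+y)/2) * (2 + z))).
  destruct (RInt_deriv (fun u => - / (2 * (1 + u * u) ^ 2)) (fun u => 2 * u / (1 + u * u) ^ 3) 0 C) as [Ek exk].
  { intros u. auto_derive. apply Rgt_not_eq; pos2. field. apply Rgt_not_eq; pos2. }
  { intros u. apply (ex_derive_continuous (K:=R_AbsRing) (V:=R_NormedModule)). auto_derive. apply Rgt_not_eq; pos2. }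
  apply Rle_trans with (RInt (fun u => z / 4 * bfun g c u - d * (2 * u / (1 + u * u) ^ 3)) 0 C).
  - apply RInt_le; auto. apply exE; auto.
    apply (ex_RInt_minus (V:=R_CompleteNormedModule) (fun u => z / 4 * bfun g c u) (fun u => d * (2 * u / (1 + u * u) ^ 3))).
    apply (ex_RInt_scal (V:=R_CompleteNormedModule) (bfun g c) 0 C (z/4)). apply ex_bfun; lra.
    apply (ex_RInt_scal (V:=R_CompleteNormedModule) (fun u => (2 * u / (1 + u * u) ^ 3)) 0 C d). auto.
    intros u Hu.
    destruct (rr_facts x y u hx hy) as [hr Hr]. destruct (ss_facts z u hz) as [hs Hs].
    assert (H1 := e_upper x y u (rr x y u) (ss z u) z hx hy hz ltac:(lra) hr hs Hr Hs).
    assert (H2 := inv_r_le x y u (rr x y u) g c hx hy ltac:(lra) hr Hr hg Hg hga hc Hc).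
    unfold ef. fold d in H1.
    assert (z / (4 * rr x y u) <= z / 4 * bfun g c u).
    { replace (z / (4 * rr x y u)) with (z / 4 * / rr x y u) by (field; lra).
      apply Rmult_le_compat_l. lra. exact H2. }
    lra.
  - rewrite RInt_lin; auto. 2: apply ex_bfun; lra.
    rewrite Ek. assert (HB := RInt_bfun g c C hg hgc hC).
    assert (0 <= d) by (unfold d; apply Rmult_le_pos; [nra| apply Rlt_le, Rinv_0_lt_compat; pos2]).
    replace (- / (2 * (1 + C * C) ^ 2) - - / (2 * (1 + 0 * 0) ^ 2)) with (/ 2 - / (2 * (1 + C * C) ^ 2)) by (field; apply Rgt_not_eq; pos2).
    apply Rplus_le_compat_r. apply Rmult_le_compat_l. lra. exact HB.
Qed.

Lemma IE_lower x y z C : 0 < x -> 0 < y -> 0 < z -> 0 <= C ->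
  z / 4 * (atan (C / sqrt ((x+y)/2)) / sqrt ((x+y)/2) - z / ((x+y)/2) * (atan (C / sqrt z) / sqrt z))
  <= RInt (ef x y z) 0 C.
Proof.
  intros hx hy hz hC.
  set (a := (x+y)/2). assert (ha : 0 < a) by (unfold a; lra).
  assert (hsa : 0 < sqrt a) by (apply sqrt_lt_R0; auto).
  assert (Hsa : sqrt a * sqrt a = a) by (apply sqrt_sqrt; lra).
  assert (hsz : 0 < sqrt z) by (apply sqrt_lt_R0; auto).
  assert (Hsz : sqrt z * sqrt z = z) by (apply sqrt_sqrt; lra).
  destruct (RInt_deriv (fun u => z / 4 * (atan (u / sqrt a) / sqrt a - z / a * (atan (u / sqrt z) / sqrt z)))
              (fun u => z / 4 * (1 / (u * u + a) - z / (a * (u * u + z)))) 0 C) as [E Ex].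
  { intros u. auto_derive. repeat split; lra.
    set (sa := sqrt a) in *. set (sz := sqrt z) in *. clearbody a sa sz.
    assert (a = sa * sa) by lra. assert (z = sz * sz) by lra. subst a z.
    field. repeat split; try lra; try nra. }
  { intros u. apply (ex_derive_continuous (K:=R_AbsRing) (V:=R_NormedModule)). auto_derive.
    repeat split; apply Rgt_not_eq; pos2. }
  rewrite Rdiv_0_l, atan_0, Rdiv_0_l, Rdiv_0_l, atan_0, Rdiv_0_l in E.
  assert (E' : z / 4 * (atan (C / sqrt a) / sqrt a - z / a * (atan (C / sqrt z) / sqrt z))
    = RInt (fun u => z / 4 * (1 / (u * u + a) - z / (a * (u * u + z)))) 0 C) by (rewrite E; unfold Rdiv; ring).
  rewrite E'.
  apply RInt_le; auto. apply exE; auto.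
  intros u Hu.
  destruct (rr_facts x y u hx hy) as [hr Hr]. destruct (ss_facts z u hz) as [hs Hs].
  apply (e_lower x y u (rr x y u) (ss z u) z hx hy hz ltac:(lra) hr hs Hr Hs).
Qed.


Lemma Hf_bounds x y z C : 0 < x -> 0 < y -> 0 < z -> 0 < C ->
  - (z / (4 * C)) <= Hf x y z C <= 0.
Proof.
  intros hx hy hz hC.
  destruct (rr_facts x y C hx hy) as [hr Hr]. destruct (ss_facts z C hz) as [hs Hs].
  unfold Hf. set (r := rr x y C) in *. set (s := ss z C) in *. clearbody r s.
  assert (hsC : C < s) by nra.
  assert (E : / 2 * (C * C * C) * (C / s - 1) / r = - (C * C * C * z / (2 * r * s * (s + C)))).
  { assert (z = s * s - C * C) by lra. subst z. field. lra. }
  rewrite E.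
  assert (h1 : C * C <= r) by nra.
  assert (0 < C * C * C * z / (2 * r * s * (s + C))) by pos2.
  split; [|lra].
  apply Ropp_le_contravar. apply div_le. pos2. lra.
  assert (4 * (C*C*C*C) <= 2 * r * s * (s + C)).
  { assert (C * C * C <= r * s) by (apply Rmult_le_compat; nra).
    assert (C * C * C * (2 * C) <= r * s * (s + C)) by (apply Rmult_le_compat; nra). nra. }
  assert (0 <= z * C) by nra.
  replace (C * C * C * z * (4 * C)) with (z * (4 * (C*C*C*C))) by ring.
  replace (z * (2 * r * s * (s + C))) with (z * (2 * r * s * (s + C))) by ring.
  apply Rmult_le_compat_l; lra.
Qed.

Lemma atan_le_id t : 0 <= t -> atan t <= t.
Proof.
  intros ht.
  destruct (RInt_deriv atan (fun u => / (1 + u * u)) 0 t) as [E Ex].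
  { intros u. assert (H := is_derive_atan u). unfold Rsqr in H. exact H. }
  { intros u. apply (ex_derive_continuous (K:=R_AbsRing) (V:=R_NormedModule)). auto_derive. apply Rgt_not_eq; pos2. }
  rewrite atan_0, Rminus_0_r in E. rewrite <- E.
  apply Rle_trans with (RInt (fun _ => 1) 0 t).
  - apply RInt_le; auto. apply ex_RInt_const. intros u Hu.
    replace 1 with (/ 1) by field. apply Rinv_le_contravar; nra.
  - rewrite RInt_const. change (scal (t - 0) 1) with ((t - 0) * 1). lra.
Qed.

Lemma PI_lt_4 : PI < 4.
Proof.
  destruct (PI_ineq 1) as [_ H]. simpl in H. unfold tg_alt, PI_tg in H. simpl in H. lra.
Qed.

Lemma Rpower_c c : 0 < c -> Rpower (/ (c * c)) (/ 4) = / sqrt c.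
Proof.
  intros hc. rewrite <- Rpower_sqrt by auto. unfold Rpower.
  rewrite ln_Rinv by pos2. rewrite ln_mult by auto.
  rewrite <- exp_Ropp. f_equal. field.
Qed.

Lemma alg1 sa z p : 0 < sa -> 0 < z -> 0 < p ->
  8 / (p * z) * (p * z / (8 * sa) - p * z * sqrt z / (8 * (sa * sa)) - z * sqrt z * (4 - p) / (16 * (sa * sa)))
  = / sa * (1 - 4 / p * (sqrt z / sa)) + sqrt z * (4 - p) / (2 * p * (sa * sa)).
Proof. intros. field. repeat split; lra. Qed.

Theorem mainTheorem17 (x y z : R) (hx : 0 < x) (hy : 0 < y) (hz : 0 < z) :
  let a := (x + y) / 2 in
  let g := sqrt (x * y) in
  (exists theta : R,
     R_G x y z = R_G x y 0 + PI * theta * z / 8 /\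
     / sqrt a * (1 - 4 / PI * sqrt (z / a)) < theta /\
     theta < Rpower (2 / (a * g + g ^ 2)) (/ 4)) /\
  Rpower (2 / (a * g + g ^ 2)) (/ 4) <= / sqrt g /\
  (Rpower (2 / (a * g + g ^ 2)) (/ 4) = / sqrt g <-> x = y).
Proof.
  intros a g.
  destruct (consts x y hx hy) as (hg & Hg & hga & hc & Hc & hgc).
  set (c := sqrt (g * ((a + g) / 2))) in *.
  assert (hg' : 0 < g) by exact hg. assert (Hg' : g * g = x * y) by exact Hg.
  assert (hga' : g <= a) by exact hga. assert (hc' : 0 < c) by exact hc.
  assert (Hc' : c * c = g * ((a + g) / 2)) by exact Hc. assert (hgc' : g <= c) by exact hgc.
  clear hg Hg hga hc Hc hgc. rename hg' into hg, Hg' into Hg, hga' into hga, hc' into hc, Hc' into Hc, hgc' into hgc.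
  assert (HU : Rpower (2 / (a * g + g ^ 2)) (/ 4) = / sqrt c).
  { rewrite <- Rpower_c by auto. f_equal. rewrite Hc. field. split; nra. }
  rewrite HU.
  assert (ha : 0 < a) by (unfold a; lra).
  assert (hsa : 0 < sqrt a) by (apply sqrt_lt_R0; auto).
  assert (Hsa : sqrt a * sqrt a = a) by (apply sqrt_sqrt; lra).
  assert (hsz : 0 < sqrt z) by (apply sqrt_lt_R0; auto).
  assert (Hsz : sqrt z * sqrt z = z) by (apply sqrt_sqrt; lra).
  assert (hsc : 0 < sqrt c) by (apply sqrt_lt_R0; auto).
  assert (hsg : 0 < sqrt g) by (apply sqrt_lt_R0; auto).
  assert (hPI := PI_RGT_0). assert (hPI4 := PI_lt_4).
  split; [|split].
  - destruct (lim_A x y z hx hy ltac:(lra)) as [lA HA].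
    destruct (lim_A x y 0 hx hy ltac:(lra)) as [lB HB].
    rewrite (RG_of_lim x y z lA hx hy ltac:(lra) HA).
    rewrite (RG_of_lim x y 0 lB hx hy ltac:(lra) HB).
    assert (HD := lim_minus _ _ _ _ HA HB).
    set (d := z * z / (4 * (1 + (x+y)/2) * (2 + z))).
    assert (hd : 0 < d) by (unfold d; pos2).
    assert (Hup : lA - lB <= PI * z / (8 * sqrt c) - d / 4).
    { apply (lim_le _ _ _ 1 HD). intros C HC.
      rewrite diff_eq by lra.
      destruct (Hf_bounds x y z C hx hy hz ltac:(lra)) as [_ H2].
      assert (H1 : RInt (ef x y z) 0 C <= z/4*(PI/(2*sqrt c)) - d*(/2 - /(2*(1+C*C)^2)))
        by exact (IE_upper x y z C hx hy hz ltac:(lra)).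
      assert (/ (2 * (1 + C * C) ^ 2) <= / 4).
      { apply Rinv_le_contravar. lra. assert (2 <= (1 + C*C)) by nra. nra. }
      assert (z / 4 * (PI / (2 * sqrt c)) = PI * z / (8 * sqrt c)) by (field; lra).
      assert (d * (/ 2 - / (2 * (1 + C * C) ^ 2)) >= d / 4) by nra.
      lra. }
    set (N := Rmax 1 (8 * a / ((4 - PI) * sqrt z))).
    assert (Hlow : PI * z / (8 * sqrt a) - PI * z * sqrt z / (8 * a) - z * sqrt z * (4 - PI) / (16 * a) <= lA - lB).
    { apply (lim_ge _ _ _ N HD). intros C HC.
      assert (hN1 : 1 <= N) by apply Rmax_l.
      assert (hN2 : 8 * a / ((4 - PI) * sqrt z) <= N) by apply Rmax_r.
      assert (hC : 0 < C) by lra.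
      rewrite diff_eq by lra.
      destruct (Hf_bounds x y z C hx hy hz hC) as [H2 _].
      assert (H1 := IE_lower x y z C hx hy hz ltac:(lra)). fold a in H1.
      destruct (atan_bound (C / sqrt z)) as [_ Hat1].
      assert (Hat2 : atan (C / sqrt a) = PI / 2 - atan (sqrt a / C)).
      { rewrite <- atan_inv by pos2. f_equal. field. lra. }
      assert (Hat3 : atan (sqrt a / C) <= sqrt a / C) by (apply atan_le_id; apply Rlt_le; pos2).
      assert (HzC : z / (4 * C) <= z * sqrt z * (4 - PI) / (32 * a)).
      { assert (8 * a / ((4 - PI) * sqrt z) <= C) by lra.
        apply div_le. pos2. pos2.
        assert (8 * a <= C * ((4 - PI) * sqrt z)).
        { apply Rmult_le_reg_r with (/ ((4 - PI) * sqrt z)). pos2.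
          replace (C * ((4 - PI) * sqrt z) * / ((4 - PI) * sqrt z)) with C by (field; lra). lra. }
        nra. }
      assert (E1 : z / 4 * (atan (C / sqrt a) / sqrt a) >= PI * z / (8 * sqrt a) - z / (4 * C)).
      { rewrite Hat2.
        assert (z / 4 * ((PI / 2 - atan (sqrt a / C)) / sqrt a) = PI * z / (8 * sqrt a) - z / 4 * (atan (sqrt a / C) / sqrt a)) by (field; lra).
        assert (z / 4 * (atan (sqrt a / C) / sqrt a) <= z / (4 * C)).
        { replace (z / (4 * C)) with (z / 4 * ((sqrt a / C) / sqrt a)) by (field; lra).
          apply Rmult_le_compat_l. lra. unfold Rdiv at 1 3. apply Rmult_le_compat_r. apply Rlt_le; pos2. lra. }
        lra. }
      assert (E2 : z / 4 * (z / a * (atan (C / sqrt z) / sqrt z)) <= PI * z * sqrt z / (8 * a)).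
      { assert (E : PI * z * sqrt z / (8 * a) = z / 4 * (z / a * ((PI / 2) / sqrt z))).
        { replace (z / a) with (sqrt z * sqrt z / a) by (rewrite Hsz; reflexivity). field. lra. }
        rewrite E.
        apply Rmult_le_compat_l. lra. apply Rmult_le_compat_l. apply Rlt_le; pos2.
        unfold Rdiv. apply Rmult_le_compat_r. apply Rlt_le; pos2. lra. }
      assert (z * sqrt z * (4 - PI) / (32 * a) <= z * sqrt z * (4 - PI) / (16 * a) / 2) by (right; field; lra).
      assert (0 < z * sqrt z * (4 - PI) / (16 * a)) by pos2.
      rewrite Rmult_minus_distr_l in H1. lra. }
    exists (8 * (lA - lB) / (PI * z)).
    split; [field; lra|split].
    + rewrite sqrt_div_alt by lra.
      apply Rlt_le_trans with (8 / (PI * z) * (PI * z / (8 * sqrt a) - PI * z * sqrt z / (8 * a) - z * sqrt z * (4 - PI) / (16 * a))).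
      * assert (E : 8 / (PI * z) * (PI * z / (8 * sqrt a) - PI * z * sqrt z / (8 * a) - z * sqrt z * (4 - PI) / (16 * a))
                   = / sqrt a * (1 - 4 / PI * (sqrt z / sqrt a)) + sqrt z * (4 - PI) / (2 * PI * a)).
        { assert (E0 := alg1 (sqrt a) z PI hsa hz hPI). rewrite Hsa in E0. rewrite E0. reflexivity. }
        rewrite E. assert (0 < sqrt z * (4 - PI) / (2 * PI * a)) by pos2. lra.
      * replace (8 * (lA - lB) / (PI * z)) with (8 / (PI * z) * (lA - lB)) by (field; lra).
        apply Rmult_le_compat_l. apply Rlt_le; pos2. lra.
    + apply Rle_lt_trans with (8 / (PI * z) * (PI * z / (8 * sqrt c) - d / 4)).
      * replace (8 * (lA - lB) / (PI * z)) with (8 / (PI * z) * (lA - lB)) by (field; lra).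
        apply Rmult_le_compat_l. apply Rlt_le; pos2. lra.
      * assert (E : 8 / (PI * z) * (PI * z / (8 * sqrt c) - d / 4) = / sqrt c - 2 * d / (PI * z)) by (field; lra).
        rewrite E. assert (0 < 2 * d / (PI * z)) by pos2. lra.
  - apply Rinv_le_contravar. auto. apply sqrt_le_1_alt. auto.
  - split.
    + intros H.
      assert (H1 : sqrt c = sqrt g) by (rewrite <- (Rinv_inv (sqrt c)), <- (Rinv_inv (sqrt g)), H; reflexivity).
      assert (H2 : c = g) by (rewrite <- (sqrt_sqrt c), <- (sqrt_sqrt g), H1 by lra; reflexivity).
      assert (H3 : a = g) by (rewrite H2 in Hc; nra).
      unfold a in H3. assert ((x + y) * (x + y) = 4 * (x * y)) by (rewrite <- Hg, <- H3; field). nra.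
    + intros <-. assert (Eg : g = x) by (unfold g; apply sqrt_square; lra).
      assert (Ea : a = x) by (unfold a; field).
      assert (Ec : c = x) by (unfold c; rewrite Eg, Ea; replace (x * ((x + x) / 2)) with (x * x) by field; apply sqrt_square; lra).
      rewrite Ec, Eg. reflexivity.
Qed.
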